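(* Let $k,k'\ge1$ be integers. For $X\in\mathcal{P}$ let $\mathcal{C}^{-1}(X)=\{(P,Q)\in\mathcal{P}^2:[P,Q]\in\{2iX,-2iX\}\}$ and $\mathcal{S}_X=\mathcal{C}^{-1}(X)\cap(\mathcal{P}_k\times\mathcal{P}_{k'})$. For $(P,Q)\in\mathcal{S}_X$, its pattern is the pair of sets $(\mathrm{supp}(P)\cap\mathrm{supp}(X),\ \mathrm{supp}(Q)\cap\mathrm{supp}(X))$, and for sets $S,T$ let $\mathcal{S}_X[S,T]$ be the set of $(P,Q)\in\mathcal{S}_X$ with pattern $(S,T)$. Then: (a) for every $X\in\mathcal{P}$, there are at most $(2(k+k'))^k$ distinct patterns among elements of $\mathcal{S}_X$; (b) for every $(P,Q)\in\mathcal{P}_k\times\mathcal{P}_{k'}$, there are at most $(4(k+k'))^k$ distinct sets $\mathcal{S}_Y[S,T]$ (ranging over all $Y\in\mathcal{P}$ and all patterns $(S,T)$) that contain both a pair of the form $(P,R)$ and a pair of the form $(R',Q)$; and if $\mathrm{supp}(P)\cap\mathrm{supp}(Q)=\varnothing$, there are no such sets.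
   Context: $\mathcal{P}$ denotes the set of $n$-fold tensor products of Pauli matrices $\{I,\sigma_x,\sigma_y,\sigma_z\}$. The support $\mathrm{supp}(P)\subseteq[n]$ is the set of qubits on which $P$ acts non-trivially; $\mathcal{P}_j$ is the set of Paulis with $|\mathrm{supp}|\le j$. $[A,B]=AB-BA$. *)

(* Defs.v *)
From HB Require Import structures.
From mathcomp Require Import all_boot all_order all_algebra all_field.
Set Implicit Arguments. Unset Strict Implicit. Unset Printing Implicit Defensive.
Import Order.TTheory GRing.Theory Num.Theory.
Local Open Scope ring_scope.

Inductive pauli1 := pI | pX | pY | pZ.

Definition pauli1_to (p : pauli1) : 'I_4 :=
  match p with pI => inord 0 | pX => inord 1 | pY => inord 2 | pZ => inord 3 end.
Definition pauli1_of (i : 'I_4) : pauli1 :=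
  match val i with 0 => pI | 1 => pX | 2 => pY | _ => pZ end.
Lemma pauli1_toK : cancel pauli1_to pauli1_of.
Proof. by case; rewrite /pauli1_of /= inordK. Qed.
HB.instance Definition _ := Equality.copy pauli1 (can_type pauli1_toK).
HB.instance Definition _ := Choice.copy pauli1 (can_type pauli1_toK).
HB.instance Definition _ := Countable.copy pauli1 (can_type pauli1_toK).
HB.instance Definition _ := Finite.copy pauli1 (can_type pauli1_toK).

(* Entries of the 2x2 Pauli matrices (basis |0>,|1> encoded as false,true):
   I = [[1,0],[0,1]], X = [[0,1],[1,0]], Y = [[0,-i],[i,0]], Z = [[1,0],[0,-1]]. *)
Definition sigma_entry (p : pauli1) (a b : bool) : algC :=
  match p with
  | pI => if a == b then 1 else 0
  | pX => if a == b then 0 else 1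
  | pY => if a == b then 0 else (if a then 'i else - 'i)
  | pZ => if a == b then (if a then -1 else 1) else 0
  end.

Definition pauli (n : nat) := {ffun 'I_n -> pauli1}.

Definition qbit (n : nat) (a : 'I_(2 ^ n)) (i : 'I_n) : bool := odd (a %/ 2 ^ i).

(* The 2^n x 2^n matrix of the tensor product P_0 (x) ... (x) P_{n-1}
   (entries of a Kronecker product are products of the factor entries). *)
Definition pauli_mx (n : nat) (P : pauli n) : 'M[algC]_(2 ^ n) :=
  \matrix_(a, b) \prod_(i < n) sigma_entry (P i) (qbit a i) (qbit b i).

Definition commmx (m : nat) (A B : 'M[algC]_m) : 'M[algC]_m := A *m B - B *m A.

Definition supp (n : nat) (P : pauli n) : {set 'I_n} := [set i | P i != pI].

Definition in_Cinv (n : nat) (X : pauli n) (pq : pauli n * pauli n) : bool :=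
  (commmx (pauli_mx pq.1) (pauli_mx pq.2) == (2 * 'i) *: pauli_mx X) ||
  (commmx (pauli_mx pq.1) (pauli_mx pq.2) == - (2 * 'i) *: pauli_mx X).

Definition SX (n k k' : nat) (X : pauli n) : {set pauli n * pauli n} :=
  [set pq | [&& in_Cinv X pq, (#|supp pq.1| <= k)%N & (#|supp pq.2| <= k')%N]].

Definition pattern (n : nat) (X : pauli n) (pq : pauli n * pauli n)
  : {set 'I_n} * {set 'I_n} :=
  (supp pq.1 :&: supp X, supp pq.2 :&: supp X).

Definition SXST (n k k' : nat) (X : pauli n) (S T : {set 'I_n})
  : {set pauli n * pauli n} :=
  [set pq in SX k k' X | pattern X pq == (S, T)].

Definition SXST_family (n k k' : nat) (P Q : pauli n)
  : {set {set pauli n * pauli n}} :=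
  [set A | [exists Y : pauli n, exists S : {set 'I_n}, exists T : {set 'I_n},
      A == SXST k k' Y S T]
    && [exists R : pauli n, (P, R) \in A]
    && [exists R' : pauli n, (R', Q) \in A]].

(* Main.v *)
Require Import Defs.
From HB Require Import structures.
From mathcomp Require Import all_boot all_order all_algebra all_field.

Module Helpers.
Set Implicit Arguments. Unset Strict Implicit. Unset Printing Implicit Defensive.
Import Order.TTheory GRing.Theory Num.Theory.
Local Open Scope ring_scope.

Definition flip (p : pauli1) : bool := match p with pX | pY => true | _ => false end.
Definition mul1 (p q : pauli1) : pauli1 :=
  match p, q with
  | pI, q => q | p, pI => p
  | pX, pX => pI | pY, pY => pI | pZ, pZ => pI
  | pX, pY => pZ | pY, pX => pZ
  | pY, pZ => pX | pZ, pY => pX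
  | pZ, pX => pY | pX, pZ => pY
  end.
Definition ph (p q : pauli1) : algC :=
  match p, q with
  | pX, pY => 'i | pY, pX => - 'i
  | pY, pZ => 'i | pZ, pY => - 'i
  | pZ, pX => 'i | pX, pZ => - 'i
  | _, _ => 1
  end.

Lemma sq0 p (x z : bool) : z != x (+) flip p -> sigma_entry p x z = 0.
Proof. by case: p; case: x; case: z. Qed.

Lemma sq1 p q (x y : bool) : sigma_entry p x (x (+) flip p) * sigma_entry q (x (+) flip p) y
   = ph p q * sigma_entry (mul1 p q) x y.
Proof.
case: p; case: q; case: x; case: y => /=;
 rewrite ?mulr1 ?mul1r ?mulr0 ?mul0r ?mulrN ?mulNr ?opprK ?mulCii ?opprK ?mulr1 ?mul1r ?mulrN ?mulNr //.
Qed.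

Section Bits.
Local Open Scope nat_scope.
Lemma bits_nat_inj (m a b : nat) : (a < 2 ^ m)%N -> (b < 2 ^ m)%N ->
  (forall i, (i < m)%N -> odd (a %/ 2 ^ i) = odd (b %/ 2 ^ i)) -> a = b.
Proof.
elim: m a b => [|m IH] a b.
  by rewrite expn0 !ltnS !leqn0 => /eqP-> /eqP->.
move=> ha hb H.
have h0 := H 0%N isT; rewrite !expn0 !divn1 in h0.
have e : a %/ 2 = b %/ 2.
  apply: (IH) => [||i hi].
  - by rewrite ltn_divLR // -expnSr.
  - by rewrite ltn_divLR // -expnSr.
  - by have := H i.+1 hi; rewrite expnSr mulnC -!divnMA mulnC.
by rewrite -[a](odd_double_half) -[b](odd_double_half) h0 -!divn2 e.
Qed.

End Bits.
Definition bitsf (n : nat) (a : 'I_(2 ^ n)) : {ffun 'I_n -> bool} := [ffun i => qbit a i].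

Lemma bitsf_inj n : injective (@bitsf n).
Proof.
move=> a b /ffunP H; apply: val_inj; apply: (@bits_nat_inj n _ _ (ltn_ord a) (ltn_ord b)) => i hi.
by have := H (Ordinal hi); rewrite !ffunE.
Qed.

Lemma bitsf_surj n (f : {ffun 'I_n -> bool}) : exists a : 'I_(2 ^ n), bitsf a = f.
Proof.
have hc : (#|{ffun 'I_n -> bool}| <= #|'I_(2 ^ n)|)%N.
  by rewrite card_ffun card_bool !card_ord.
have /codomP[a ->] := @inj_card_onto _ _ _ (@bitsf_inj n) hc f.
by exists a.
Qed.

Lemma exists_bits n (f : 'I_n -> bool) : exists a : 'I_(2 ^ n), forall i, qbit a i = f i.
Proof.
have [a ha] := bitsf_surj [ffun i => f i].
by exists a => i; have := congr1 (fun g : {ffun 'I_n -> bool} => g i) ha; rewrite !ffunE.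
Qed.

Lemma diff_bit n (a b : 'I_(2 ^ n)) : a != b -> exists i, qbit a i != qbit b i.
Proof.
move=> neq; apply/existsP; apply: contraR neq; rewrite negb_exists => /forallP H.
apply/eqP/bitsf_inj/ffunP => i; rewrite !ffunE; exact/eqP/negPn/H.
Qed.

Definition pmul n (A B : pauli n) : pauli n := [ffun i => mul1 (A i) (B i)].

Lemma pauli_mxE n (A : pauli n) a b :
  pauli_mx A a b = \prod_(i < n) sigma_entry (A i) (qbit a i) (qbit b i).
Proof. by rewrite mxE. Qed.


Lemma pauli_mul n (A B : pauli n) :
  pauli_mx A *m pauli_mx B = (\prod_i ph (A i) (B i)) *: pauli_mx (pmul A B).
Proof.
apply/matrixP => a b; rewrite !mxE.
under [LHS]eq_bigr => c _ do rewrite !pauli_mxE.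
have [c0 hc0] := exists_bits (fun i => qbit a i (+) flip (A i)).
rewrite [LHS](bigD1 c0) //= [X in _ + X]big1 ?addr0.
  rewrite -!big_split /=; apply: eq_bigr => i _.
  by rewrite hc0 sq1 ffunE.
move=> c hc; have [i hi] := diff_bit hc.
rewrite (bigD1 i) //= sq0 ?mul0r // -hc0 //.
Qed.

Lemma mul1C p q : mul1 p q = mul1 q p.
Proof. by case: p; case: q. Qed.

Lemma mul1pp p : mul1 p p = pI.
Proof. by case: p. Qed.

Lemma php p : ph p p = 1.
Proof. by case: p. Qed.

Lemma mul1_eqI p q : mul1 p q = pI -> p = q.
Proof. by case: p; case: q. Qed.

Lemma pmulC n (A B : pauli n) : pmul A B = pmul B A.
Proof. by apply/ffunP => i; rewrite !ffunE mul1C. Qed.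

Lemma pauli_sq n (X : pauli n) : pauli_mx X *m pauli_mx X = 1%:M.
Proof.
rewrite pauli_mul big1 ?scale1r; last by move=> i _; rewrite php.
apply/matrixP => a b. rewrite [LHS]pauli_mxE !mxE.
have -> : \prod_(i < n) sigma_entry (pmul X X i) (qbit a i) (qbit b i)
        = \prod_(i < n) sigma_entry pI (qbit a i) (qbit b i).
  by apply: eq_bigr => i _; rewrite ffunE mul1pp.
case: eqVneq => [->|hab] /=.
  by rewrite big1 // => i _ /=; rewrite eqxx.
have [i hi] := diff_bit hab.
by rewrite (bigD1 i) //= (negbTE hi) mul0r.
Qed.

Lemma scalar_pauli n (Z : pauli n) (s c : algC) :
  s *: pauli_mx Z = c%:M -> c != 0 -> s != 0 /\ forall i, Z i = pI.
Proof.
move=> H hc; have [a0 h0] := exists_bits (fun _ : 'I_n => false).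
have e0 := congr1 (fun M : 'M_(2 ^ n) => M a0 a0) H.
rewrite /= !mxE eqxx mulr1n in e0.
have hs : s != 0 by apply: contraNneq hc => hs; rewrite -e0 hs mul0r.
split=> // i.
have [a1 h1] := exists_bits (fun j : 'I_n => j == i).
have e1 := congr1 (fun M : 'M_(2 ^ n) => M a1 a1) H.
rewrite /= !mxE eqxx mulr1n in e1.
rewrite (bigD1 i) //= in e0; rewrite (bigD1 i) //= in e1.
set r := \prod_(j < n | j != i) _ in e0.
have er : \prod_(j < n | j != i) sigma_entry (Z j) (qbit a1 j) (qbit a1 j) = r.
  apply: eq_bigr => j hj; rewrite h0 h1 (negbTE hj) //.
rewrite er in e1.
rewrite h0 h1 eqxx in e0 e1 => {H h0 h1}.
case: (Z i) e0 e1 => //= e0 e1.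
- by move: hc; rewrite -e0 mul0r mulr0 eqxx.
- by move: hc; rewrite -e0 mul0r mulr0 eqxx.
- move: hc; rewrite -e0; rewrite mulN1r mulrN in e1.
  by rewrite mul1r -eqNr e1 -e0 mul1r eqxx.
Qed.

Lemma ph_sym p q : ph p q != ph q p -> [/\ p != pI, q != pI & p != q].
Proof. by case: p; case: q; rewrite /= ?eqxx //; split; apply/eqP. Qed.

Lemma Cinv_struct n (X A B : pauli n) : in_Cinv X (A, B) ->
  X = pmul A B /\ exists i, [/\ A i != pI, B i != pI & A i != B i].
Proof.
move=> hC.
have [c [hc H]] : exists c : algC, c != 0 /\
    commmx (pauli_mx A) (pauli_mx B) = c *: pauli_mx X.
  have h2 : (2 * 'i : algC) != 0 by rewrite mulf_neq0 ?neq0Ci ?pnatr_eq0.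
  case/orP: hC => /eqP H; [exists (2 * 'i) | exists (- (2 * 'i))]; split => //.
  by rewrite oppr_eq0.
rewrite /commmx !pauli_mul (pmulC B A) -scalerBl in H.
set d := _ - _ in H.
have := congr1 (mulmx ^~ (pauli_mx X)) H; rewrite /= -!scalemxAl pauli_sq.
rewrite pauli_mul scalerA scalemx1 => /scalar_pauli /(_ hc) [hs hZ].
split.
  apply/ffunP => i; have := hZ i; by rewrite !ffunE => /mul1_eqI <-.
have hd : d != 0 by apply: contraNneq hs => ->; rewrite mul0r.
have : ~~ [forall i, ph (A i) (B i) == ph (B i) (A i)].
  apply: contra hd => /forallP hf; rewrite /d subr_eq0; apply/eqP.
  by apply: eq_bigr => i _; apply/eqP/hf.
by rewrite negb_forall => /existsP [i /ph_sym hi]; exists i.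
Qed.

Local Close Scope ring_scope.

Lemma card_pauli1 : (#|{: pauli1}| <= 4)%N.
Proof. by have := leq_card _ (can_inj pauli1_toK); rewrite card_ord. Qed.

Lemma encode n k (T' : finType) (S0 : {set 'I_n}) (h : 'I_n -> T') (i0 : 'I_n) :
  i0 \in S0 -> (#|S0| <= k)%N ->
  exists g : {ffun 'I_k -> 'I_n * T'},
    (forall j, (g j).1 \in S0 /\ (g j).2 = h (g j).1) /\
    (forall x, x \in S0 -> exists j, (g j).1 = x).
Proof.
move=> hi0 hk.
exists [ffun j : 'I_k => (nth i0 (enum S0) j, h (nth i0 (enum S0) j))].
split=> [j|x hx]; rewrite ?ffunE /=.
  split=> //; case: (ltnP j (size (enum S0))) => hj.
    by rewrite -mem_enum mem_nth.
  by rewrite nth_default.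
have hxi : (index x (enum S0) < k)%N.
  by apply: leq_trans hk; rewrite cardE index_mem mem_enum.
by exists (Ordinal hxi); rewrite ffunE /= nth_index // mem_enum.
Qed.

Lemma card_D n k (T' : finType) (U : {set 'I_n}) :
  #|[set g : {ffun 'I_k -> 'I_n * T'} | [forall j, (g j).1 \in U]]| = (#|U| * #|T'|) ^ k.
Proof.
rewrite -cardsT -cardsX -[k in RHS]card_ord -card_ffun_on.
apply: eq_card => g; rewrite inE; apply/forallP/ffun_onP => H j.
  by rewrite inE /= H inE.
by have := H j; rewrite inE => /andP[].
Qed.

Lemma in_supp n (P : pauli n) i : (i \in supp P) = (P i != pI).
Proof. by rewrite inE. Qed.

Lemma mul1_neqI p q : p != q -> mul1 p q != pI.
Proof. by apply: contra => /eqP/mul1_eqI ->. Qed.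

Lemma neqpI p : (p != pI) = (match p with pI => false | _ => true end).
Proof. by case: p; rewrite ?eqxx //; apply/eqP. Qed.

Lemma supp_pmul n (A B : pauli n) i : i \in supp (pmul A B) ->
  (i \in supp A) || (i \in supp B).
Proof. by rewrite !in_supp ffunE !neqpI; case: (A i); case: (B i). Qed.

Lemma supp_sub n (X P Q : pauli n) : X = pmul P Q ->
  (#|supp X| <= #|supp P| + #|supp Q|)%N.
Proof.
move=> hX; subst X.
apply: (@leq_trans #|supp P :|: supp Q|); last exact: leq_card_setU.
apply: subset_leq_card; apply/subsetP => i hi; rewrite inE; exact: supp_pmul.
Qed.

Lemma partA n k k' (X : pauli n) (hk : (0 < k)%N) :
  (#|[set pattern X pq | pq in SX k k' X]| <= (2 * (k + k')) ^ k)%N.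
Proof.
case: (set_0Vmem (SX k k' X)) => [->|[[P0 Q0] h0]].
  by rewrite imset0 cards0.
pose U := supp X.
have hU : (#|U| <= k + k')%N.
  move: h0; rewrite inE /= => /and3P[/Cinv_struct[hX _] h1 h2].
  by apply: leq_trans (supp_sub hX) _; apply: leq_add.
pose D := [set g : {ffun 'I_k -> 'I_n * bool} | [forall j, (g j).1 \in U]].
pose Sg (g : {ffun 'I_k -> 'I_n * bool}) := [set (g j).1 | j : 'I_k].
pose dec (g : {ffun 'I_k -> 'I_n * bool}) :=
  (Sg g, [set (g j).1 | j in [pred j | (g j).2]] :|: (U :\: Sg g)).
have sub : [set pattern X pq | pq in SX k k' X] \subset [set dec g | g in D].
  apply/subsetP => _ /imsetP[[P Q] hpq ->].
  move: hpq; rewrite inE /= => /and3P[/Cinv_struct[hX [i0 [hP0 hQ0 hPQ0]]] hP hQ].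
  pose S0 := supp P :&: supp X.
  have hi0 : i0 \in S0.
    by rewrite !inE hP0 hX ffunE mul1_neqI.
  have hS0 : (#|S0| <= k)%N.
    by apply: leq_trans hP; apply: subset_leq_card; apply: subsetIl.
  have [g [hg1 hg2]] := encode (fun x => x \in supp Q) hi0 hS0.
  apply/imsetP; exists g.
    by rewrite inE; apply/forallP => j; have [/setIP[]] := hg1 j.
  have eS : Sg g = S0.
    apply/setP => x; apply/imsetP/idP => [[j _ ->]|hx]; first by case: (hg1 j).
    by have [j <-] := hg2 x hx; exists j.
  rewrite /dec /pattern /= eS; congr pair.
  apply/setP => x; rewrite in_setI in_setU in_setD.
  case hxS: (x \in S0) => /=.
    have [j hj] := hg2 x hxS.
    have /setIP[_ ->] := hxS; rewrite andbT orbF.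
    apply/idP/imsetP => [hxQ|[j' hj' ->]].
      by exists j => //; rewrite inE (proj2 (hg1 j)) hj.
    by move: hj'; rewrite inE (proj2 (hg1 j')).
  have -> : (x \in [set (g j).1 | j in [pred j | (g j).2]]) = false.
    apply/imsetP => [[j _ hj]]; move: hxS; rewrite hj.
    by rewrite (proj1 (hg1 j)).
  rewrite /= /U; case hx: (x \in supp X); rewrite ?andbF //= andbT.
  have hxP : x \notin supp P by move: hxS; rewrite in_setI hx andbT => ->.
  move: hx hxP; rewrite !in_supp hX ffunE negbK => hm /eqP hPx.
  by rewrite hPx in hm.
apply: leq_trans (subset_leq_card sub) _.
apply: leq_trans (leq_imset_card _ _) _.
by rewrite card_D card_bool mulnC leq_exp2r // leq_mul2l hU orbT.
Qed.

Lemma family_mem n k k' (P Q : pauli n) A : A \in SXST_family k k' P Q ->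
  exists Y R R', [/\ A = SXST k k' Y (supp P :&: supp Y) (supp Q :&: supp Y),
     (P, R) \in SX k k' Y, (R', Q) \in SX k k' Y,
     supp R :&: supp Y = supp Q :&: supp Y &
     supp R' :&: supp Y = supp P :&: supp Y].
Proof.
rewrite inE => /andP[/andP[/existsP[Y /existsP[S /existsP[T /eqP eA]]]
  /existsP[R hR]] /existsP[R' hR']].
move: hR hR'; rewrite eA !inE /pattern /= => /andP[h1 /eqP[e1 e2]] /andP[h2 /eqP[e3 e4]].
exists Y, R, R'; split.
- by rewrite -e1 -e4.
- by rewrite inE.
- by rewrite inE.
- by rewrite e2 e4.
- by rewrite e1 e3.
Qed.

Lemma partB2 n k k' (P Q : pauli n) :
  supp P :&: supp Q = set0 -> SXST_family k k' P Q = set0.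
Proof.
move=> hPQ; apply/setP => A; rewrite in_set0; apply/negbTE/negP => /family_mem.
move=> [Y [R [R' [_ h1 _ e1 _]]]].
move: h1; rewrite inE /= => /and3P[/Cinv_struct[hY [i [hP hR hPR]]] _ _].
have hYi : i \in supp Y by rewrite in_supp hY ffunE mul1_neqI.
have hRi : i \in supp R :&: supp Y by rewrite in_setI in_supp hR hYi.
move: hRi; rewrite e1 in_setI => /andP[hQi _].
have : i \in supp P :&: supp Q by rewrite in_setI in_supp hP hQi.
by rewrite hPQ inE.
Qed.

Lemma partB1 n k k' (P Q : pauli n) (hk : (0 < k)%N) :
  (#|supp P| <= k)%N -> (#|supp Q| <= k')%N ->
  (#|SXST_family k k' P Q| <= (4 * (k + k')) ^ k)%N.
Proof.
move=> hP hQ.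
pose U := supp P :|: supp Q.
have hU : (#|U| <= k + k')%N.
  by apply: leq_trans (leq_add hP hQ); exact: leq_card_setU.
pose D := [set g : {ffun 'I_k -> 'I_n * pauli1} | [forall j, (g j).1 \in U]].
pose dec (g : {ffun 'I_k -> 'I_n * pauli1}) : pauli n :=
  [ffun i => if [pick j | (g j).1 == i] is Some j then (g j).2 else pI].
pose G (R : pauli n) := SXST k k' (pmul R Q) (supp P :&: supp (pmul R Q))
   (supp Q :&: supp (pmul R Q)).
have sub : SXST_family k k' P Q \subset [set G (dec g) | g in D].
  apply/subsetP => A /family_mem [Y [R [R' [eA _ h2 _ e4]]]].
  move: h2; rewrite inE /= => /and3P[/Cinv_struct[hY [i0 [hR0 hQ0 _]]] hR' _].
  have hsub : forall x, x \in supp R' -> x \in U.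
    move=> x hx; rewrite in_setU.
    case hxY: (x \in supp Y).
      have : x \in supp R' :&: supp Y by rewrite in_setI hx hxY.
      by rewrite e4 in_setI => /andP[->].
    move: hxY hx; rewrite !in_supp hY ffunE => /negbFE/eqP/mul1_eqI <- hx.
    by rewrite hx orbT.
  have hi0 : i0 \in supp R' by rewrite in_supp.
  have [g [hg1 hg2]] := encode (fun x => R' x) hi0 hR'.
  have edec : dec g = R'.
    apply/ffunP => i; rewrite ffunE; case: pickP => [j /eqP hj | hnone].
      by rewrite (proj2 (hg1 j)) hj.
    case hi: (i \in supp R').
      by have [j hj] := hg2 i hi; move: (hnone j); rewrite hj eqxx.
    by move: hi; rewrite in_supp => /negbFE/eqP.
  apply/imsetP; exists g.
    by rewrite inE; apply/forallP => j; apply: hsub; case: (hg1 j).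
  by rewrite eA /G edec -hY.
apply: leq_trans (subset_leq_card sub) _.
apply: leq_trans (leq_imset_card _ _) _.
by rewrite card_D leq_exp2r // mulnC leq_mul // card_pauli1.
Qed.

End Helpers.
Import Helpers.
Unset Implicit Arguments. Set Strict Implicit. Set Printing Implicit Defensive.

Theorem lemma3p6 (n k k' : nat) (hk : (1 <= k)%N) (hk' : (1 <= k')%N) :
  (forall X : pauli n,
      (#|[set pattern X pq | pq in SX k k' X]| <= (2 * (k + k')) ^ k)%N)
  /\
  (forall P Q : pauli n, (#|supp P| <= k)%N -> (#|supp Q| <= k')%N ->
      (#|SXST_family k k' P Q| <= (4 * (k + k')) ^ k)%N
      /\ (supp P :&: supp Q = set0 -> SXST_family k k' P Q = set0)).
Proof.
split=> [X|P Q hP hQ]; first exact: partA.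
split; [exact: partB1 | exact: partB2].
Qed.
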